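(* Let $a<b$ and let $\phi:[a,b]^n\to\mathbb{R}$ be permutation-invariant, such that its convex envelope over $[a,b]^n$ coincides with the convex envelope over $[a,b]^n$ of its restriction to $\{a,b\}^n$ (the function equal to $\phi$ on $\{a,b\}^n$ and $+\infty$ elsewhere). For $i=1,\dots,n$ and $j=0,\dots,n$, let $p_{ij}=a$ if $i>j$ and $p_{ij}=b$ otherwise, and let $p_{\cdot j}\in\mathbb{R}^n$ be the $j$-th column. Define $f(x)=\phi(p_{\cdot0})+\sum_{i=1}^n\frac{x_i-a}{b-a}\big(\phi(p_{\cdot i})-\phi(p_{\cdot i-1})\big)$. Then for every $x\in[a,b]^n$, $$\mathrm{conv}_{[a,b]^n}(\phi)(x)=\min\{f(u)\mid u\ge_m x,\ b\ge u_1\ge\dots\ge u_n\ge a\}.$$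
   Context: $\mathrm{conv}_C(\phi)$ denotes the convex envelope (largest convex underestimator) of $\phi$ over $C$. $\phi$ is permutation-invariant if $\phi(Qx)=\phi(x)$ for all permutation matrices $Q$. $u\ge_m x$ means $\sum_{i=1}^j u_{[i]}\ge\sum_{i=1}^j x_{[i]}$ for $j<n$ with equality for $j=n$ ($v_{[i]}$ the $i$-th largest entry). *)

(* Defs.v *)
From HB Require Import structures.
From mathcomp Require Import all_boot all_order all_algebra all_fingroup.
Set Implicit Arguments. Unset Strict Implicit. Unset Printing Implicit Defensive.
Import Order.TTheory GRing.Theory Num.Theory.
Local Open Scope ring_scope.

Section Defs.
Variables (R : realFieldType) (n : nat).

Definition in_box (a b : R) (x : 'rV[R]_n) : Prop :=
  forall i : 'I_n, a <= x ord0 i <= b.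

Definition in_vertices (a b : R) (x : 'rV[R]_n) : Prop :=
  forall i : 'I_n, x ord0 i = a \/ x ord0 i = b.

Definition convex_on (C : 'rV[R]_n -> Prop) (h : 'rV[R]_n -> R) : Prop :=
  forall x y t, C x -> C y -> 0 <= t <= 1 ->
    h (t *: x + (1 - t) *: y) <= t * h x + (1 - t) * h y.

(* g is the convex envelope over C of the (extended-valued) function equal to
   phi on S and +infinity on C \ S  (S a subset of C):
   g is convex on C, g <= phi on S, and g dominates every convex h on C
   with h <= phi on S. *)
Definition is_conv_env (C S : 'rV[R]_n -> Prop) (phi : 'rV[R]_n -> R)
  (g : 'rV[R]_n -> R) : Prop :=
  [/\ convex_on C g,
      (forall x, S x -> g x <= phi x) &
      (forall h, convex_on C h -> (forall x, S x -> h x <= phi x) ->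
         forall x, C x -> h x <= g x)].

Definition perm_invariant_on (C : 'rV[R]_n -> Prop) (phi : 'rV[R]_n -> R) : Prop :=
  forall (s : 'S_n) x, C x -> phi (col_perm s x) = phi x.

(* entries sorted in nonincreasing order: (dsort x)`_k = x_[k+1] *)
Definition dsort (x : 'rV[R]_n) : seq R :=
  sort (fun u v : R => v <= u) [seq x ord0 i | i <- enum 'I_n].

Definition majorizes (u x : 'rV[R]_n) : Prop :=
  (forall j : nat, (j < n)%N ->
     \sum_(k < j) (dsort x)`_k <= \sum_(k < j) (dsort u)`_k) /\
  \sum_(k < n) (dsort u)`_k = \sum_(k < n) (dsort x)`_k.

(* column p_{.j}, j = 0..n: entry i (1-indexed) is b if i <= j, a otherwise;
   with 0-indexed i : 'I_n this is b iff i < j. *)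
Definition pcol (a b : R) (j : nat) : 'rV[R]_n :=
  \row_(i < n) (if (i < j)%N then b else a).

Definition ffun_f (a b : R) (phi : 'rV[R]_n -> R) (x : 'rV[R]_n) : R :=
  phi (pcol a b 0) +
  \sum_(i < n) ((x ord0 i - a) / (b - a)) *
               (phi (pcol a b i.+1) - phi (pcol a b i)).

Definition sorted_in (a b : R) (u : 'rV[R]_n) : Prop :=
  (forall i : 'I_n, a <= u ord0 i <= b) /\
  (forall i j : 'I_n, (i <= j)%N -> u ord0 j <= u ord0 i).

End Defs.

(* Main.v *)
Require Import Defs.
From HB Require Import structures.
From mathcomp Require Import all_boot all_order all_algebra all_fingroup.
From mathcomp Require Import ring lra zify.
From Stdlib Require Import Classical ClassicalEpsilon.
Import Order.TTheory GRing.Theory Num.Theory.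
Set Implicit Arguments. Unset Strict Implicit. Unset Printing Implicit Defensive.
Local Open Scope ring_scope.

Definition form (R : realFieldType) := ((nat -> R) * R)%type.

Definition ev (R : realFieldType) (m : nat) (F : form R) (y : nat -> R) : R :=
  \sum_(i < m) F.1 i * y i + F.2.

Definition feas (R : realFieldType) (m : nat) (C : seq (form R)) (y : nat -> R) : Prop :=
  (forall i, (i < m)%N -> 0 <= y i <= 1) /\ (forall F, List.In F C -> 0 <= ev m F y).

Definition fsubst (R : realFieldType) (m : nat) (F K : form R) : form R :=
  (fun i => F.1 i + F.1 m * K.1 i, F.2 + F.1 m * K.2).
Definition fbound (R : realFieldType) (m : nat) (F : form R) : form R :=
  (fun i => - (F.1 m)^-1 * F.1 i, - (F.1 m)^-1 * F.2).
Definition fcst (R : realFieldType) (c : R) : form R := (fun _ => 0, c).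
Definition fsub1 (R : realFieldType) (K : form R) : form R := (fun i => - K.1 i, 1 - K.2).
Definition upd (R : realFieldType) (m : nat) (y : nat -> R) (z : R) : nat -> R :=
  fun i => if i == m then z else y i.

Lemma ev_S (R : realFieldType) m (F : form R) y :
  ev m.+1 F y = ev m F y + F.1 m * y m.
Proof. by rewrite /ev big_ord_recr /= -addrA (addrC _ F.2) addrA. Qed.

Lemma ev_ext (R : realFieldType) m (F : form R) y y' :
  (forall i, (i < m)%N -> y i = y' i) -> ev m F y = ev m F y'.
Proof. by move=> H; rewrite /ev; congr (_ + _); apply: eq_bigr => i _; rewrite H. Qed.

Lemma ev_upd (R : realFieldType) m (F : form R) y z :
  ev m F (upd m y z) = ev m F y.
Proof. by apply: ev_ext => i lti; rewrite /upd (ltn_eqF lti). Qed.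

Lemma ev_fsubst (R : realFieldType) m (F K : form R) y :
  ev m (fsubst m F K) y = ev m F y + F.1 m * ev m K y.
Proof.
rewrite /ev /= mulrDr big_distrr /=.
have -> : \sum_(i < m) (F.1 i + F.1 m * K.1 i) * y i =
  \sum_(i < m) F.1 i * y i + \sum_(i < m) F.1 m * (K.1 i * y i).
  by rewrite -big_split; apply: eq_bigr => i _ /=; rewrite mulrDl mulrA.
by rewrite -!addrA; congr (_ + _); rewrite addrCA.
Qed.

Lemma ev_fbound (R : realFieldType) m (F : form R) y :
  ev m (fbound m F) y = - (F.1 m)^-1 * ev m F y.
Proof.
by rewrite /ev /= mulrDr big_distrr /=; congr (_ + _); apply: eq_bigr => i _; rewrite mulrA.
Qed.

Lemma ev_fcst (R : realFieldType) m (c : R) (y : nat -> R) : ev m (fcst c) y = c.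
Proof. by rewrite /ev /= big1 ?add0r // => i _; rewrite mul0r. Qed.

Lemma ev_fsub1 (R : realFieldType) m (K : form R) y : ev m (fsub1 K) y = 1 - ev m K y.
Proof.
rewrite /ev /= opprD addrCA; congr (_ + _); congr (_ + _).
by rewrite -sumrN; apply: eq_bigr => i _; rewrite mulNr.
Qed.

Lemma In_map (A B : Type) (f : A -> B) (x : A) (s : seq A) :
  List.In x s -> List.In (f x) (map f s).
Proof. elim: s => //= y s IH [->|H]; [by left|right; exact: IH]. Qed.

Lemma In_map_iff (A B : Type) (f : A -> B) (y : B) (s : seq A) :
  List.In y (map f s) -> exists x, f x = y /\ List.In x s.
Proof.
elim: s => //= x s IH [<-|H]; first by exists x; split=> //; left.
by have [z [e iz]] := IH H; exists z; split=> //; right.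
Qed.

Lemma argmax_list (T : Type) (R : realFieldType) (v : T -> R) (P : T -> bool) (K0 : T) (L : seq T) :
  exists K, (K = K0 \/ (List.In K L /\ P K)) /\ v K0 <= v K /\
     forall K', List.In K' L -> P K' -> v K' <= v K.
Proof.
elim: L => [|K1 L [K [HK [H0 HL]]]].
  by exists K0; split; [left|split=> //].
case PK1: (P K1); last first.
  exists K; split; first by case: HK => [->|[H1 H2]]; [left|right; split=> //; right].
  split=> // K' [<-|]; [by rewrite PK1|exact: HL].
case: (lerP (v K1) (v K)) => c.
  exists K; split; first by case: HK => [->|[H1 H2]]; [left|right; split=> //; right].
  by split=> // K' [<-|] //; exact: HL.
exists K1; split; first by right; split=> //; left.
split; first by apply: le_trans (ltW c).
move=> K' [<-|] // HK' PK'; apply: le_trans (HL _ HK' PK') (ltW c).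
Qed.

Lemma argmin_combine (T Y : Type) (R : realFieldType) (Fe : T -> Y -> Prop) (V : T -> Y -> R)
   (Ks : seq T) :
  (forall K, List.In K Ks -> (exists y, Fe K y) ->
      exists y, Fe K y /\ forall y', Fe K y' -> V K y <= V K y') ->
  (exists K, List.In K Ks /\ exists y, Fe K y) ->
  exists K, List.In K Ks /\ exists y, Fe K y /\
     forall K' y', List.In K' Ks -> Fe K' y' -> V K y <= V K' y'.
Proof.
elim: Ks => [|K1 Ks IH] HK [K0 [HK0 Hy0]]; first by case: HK0.
have HK1 := HK K1 (or_introl erefl).
have IH' := IH (fun K H => HK K (or_intror H)).
case: (classic (exists K, List.In K Ks /\ exists y, Fe K y)) => [Hex|Hnex].
  have [K [inK [y [Fy Hm]]]] := IH' Hex.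
  case: (classic (exists y, Fe K1 y)) => [Hy1|Hny1].
    have [y1 [Fy1 Hm1]] := HK1 Hy1.
    case: (lerP (V K1 y1) (V K y)) => c.
      exists K1; split; first by left.
      exists y1; split=> // K' y' [<-|inK'] Fy'; first exact: Hm1.
      exact: le_trans c (Hm _ _ inK' Fy').
    exists K; split; first by right.
    exists y; split=> // K' y' [<-|inK'] Fy'; last exact: Hm.
    exact: le_trans (ltW c) (Hm1 _ Fy').
  exists K; split; first by right.
  exists y; split=> // K' y' [<-|inK'] Fy'; last exact: Hm.
  by case: Hny1; exists y'.
case: HK0 => [eK0|inK0]; last by case: Hnex; exists K0.
subst K0; have [y1 [Fy1 Hm1]] := HK1 Hy0.
exists K1; split; first by left.
exists y1; split=> // K' y' [<-|inK'] Fy'; first exact: Hm1.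
by case: Hnex; exists K'; split=> //; exists y'.
Qed.

Definition F0 (R : realFieldType) (m : nat) : form R := (fun i => if i == m then 1 else 0, 0).
Definition F1 (R : realFieldType) (m : nat) : form R := (fun i => if i == m then -1 else 0, 1).
Definition Cp (R : realFieldType) m (C : seq (form R)) := F0 R m :: F1 R m :: C.
Definition CK (R : realFieldType) m (C : seq (form R)) (K : form R) :=
  map (fun F => fsubst m F K) (Cp m C).

Lemma ev_F0 (R : realFieldType) m y : ev m (F0 R m) y = 0.
Proof.
rewrite /ev /= addr0 big1 // => i _; by rewrite (ltn_eqF (ltn_ord i)) mul0r.
Qed.
Lemma ev_F1 (R : realFieldType) m y : ev m (F1 R m) y = 1.
Proof.
rewrite /ev /= big1 ?add0r // => i _; by rewrite (ltn_eqF (ltn_ord i)) mul0r.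
Qed.

Lemma feasS (R : realFieldType) m (C : seq (form R)) y :
  feas m.+1 C y <-> (forall i, (i < m)%N -> 0 <= y i <= 1) /\
                   (forall F, List.In F (Cp m C) -> 0 <= ev m.+1 F y).
Proof.
split.
  move=> [Hb HC]; split=> [i lti|F]; first by apply: Hb; apply: ltnW.
  case=> [<-|[<-|]]; last exact: HC.
    by rewrite ev_S ev_F0 /= eqxx add0r mul1r; case/andP: (Hb m (ltnSn m)).
  rewrite ev_S ev_F1 /= eqxx mulN1r subr_ge0; by case/andP: (Hb m (ltnSn m)).
move=> [Hb HC]; split=> [i|F inF]; last by apply: HC; right; right.
rewrite ltnS leq_eqVlt => /orP [/eqP->|]; last exact: Hb.
have := HC _ (or_introl erefl); have := HC _ (or_intror (or_introl erefl)).
rewrite !ev_S ev_F0 ev_F1 /= eqxx mulN1r subr_ge0 add0r mul1r => h1 h0.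
by rewrite h0 h1.
Qed.

Lemma key (R : realFieldType) m (C : seq (form R)) (f : form R) y :
  (forall i, (i < m)%N -> 0 <= y i <= 1) ->
  (forall F, List.In F (Cp m C) -> 0 <= ev m.+1 F y) ->
  exists K, List.In K (map (fbound m) (Cp m C)) /\ feas m (CK m C K) y /\
     ev m (fsubst m f K) y <= ev m.+1 f y.
Proof.
move=> Hb HC.
have HCz : forall F, List.In F (Cp m C) -> 0 <= ev m F y + F.1 m * y m.
  by move=> F /HC; rewrite ev_S.
have bnd : forall F, (F.1 m != 0) -> ev m (fbound m F) y * F.1 m = - ev m F y.
  by move=> F nz; rewrite ev_fbound mulrC mulrA mulrN mulrV ?mulN1r // unitfE.
case: (lerP 0 (f.1 m)) => hf.
  have [K [HK [H0 HL]]] := argmax_list (fun F => ev m (fbound m F) y)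
     (fun F : form R => 0 < F.1 m) (F0 R m) (Cp m C).
  have [inK posK] : List.In K (Cp m C) /\ 0 < K.1 m.
    by case: HK => [->|//]; split; [left|rewrite /= eqxx ltr01].
  set Z := ev m (fbound m K) y.
  have Zz : Z <= y m.
    have := HCz _ inK; have := bnd _ (lt0r_neq0 posK); rewrite -/Z => e.
    move=> hz; rewrite -(ler_pM2r posK) e; lra.
  exists (fbound m K); split; first exact: In_map.
  split; last first.
    rewrite ev_fsubst ev_S lerD2l; exact: ler_wpM2l.
  split=> [i lti|G]; first exact: Hb.
  move=> /(@In_map_iff _ _ (fun F => fsubst m F (fbound m K))) [F [<- inF]]; rewrite ev_fsubst -/Z.
  case: (lerP (F.1 m) 0) => hF.
    apply: le_trans (HCz _ inF) _; rewrite lerD2l; exact: ler_wnM2l.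
  have := HL _ inF hF; have := bnd _ (lt0r_neq0 hF) => e.
  rewrite -(ler_pM2r hF) e => h; rewrite (mulrC (F.1 m)); move: h; rewrite /= -/Z => h; lra.
have [K [HK [H0 HL]]] := argmax_list (fun F => - ev m (fbound m F) y)
   (fun F : form R => F.1 m < 0) (F1 R m) (Cp m C).
have [inK negK] : List.In K (Cp m C) /\ K.1 m < 0.
  by case: HK => [->|//]; split; [right; left|rewrite /= eqxx ltrN10].
set Z := ev m (fbound m K) y.
have Zz : y m <= Z.
  have := HCz _ inK; have := bnd _ (ltr0_neq0 negK); rewrite -/Z => e.
  move=> hz; rewrite -(ler_nM2r negK) e; lra.
exists (fbound m K); split; first by apply: In_map.
split; last first.
  rewrite ev_fsubst ev_S lerD2l; apply: ler_wnM2l => //; exact: ltW.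
split=> [i lti|G]; first exact: Hb.
move=> /(@In_map_iff _ _ (fun F => fsubst m F (fbound m K))) [F [<- inF]]; rewrite ev_fsubst -/Z.
case: (lerP 0 (F.1 m)) => hF.
  apply: le_trans (HCz _ inF) _; rewrite lerD2l; exact: ler_wpM2l.
have := HL _ inF hF; have := bnd _ (ltr0_neq0 hF) => e.
move=> h; move: h; rewrite /= -/Z lerN2 -(ler_nM2r hF) e => h; rewrite (mulrC (F.1 m)); lra.
Qed.

Lemma LP (R : realFieldType) m : forall (C : seq (form R)) (f : form R),
  (exists y, feas m C y) ->
  exists y, feas m C y /\ forall y', feas m C y' -> ev m f y <= ev m f y'.
Proof.
elim: m => [|m IH] C f [y0 Hy0].
  exists y0; split=> // y' _; by rewrite /ev !big_ord0.
have Hc := @argmin_combine _ _ R (fun K y => feas m (CK m C K) y)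
   (fun K y => ev m (fsubst m f K) y) (map (fbound m) (Cp m C))
   (fun K _ H => IH _ _ H).
have [K [inK [y [Fy Hm]]]] : exists K, List.In K (map (fbound m) (Cp m C)) /\ exists y,
   feas m (CK m C K) y /\ forall K' y', List.In K' (map (fbound m) (Cp m C)) ->
     feas m (CK m C K') y' -> ev m (fsubst m f K) y <= ev m (fsubst m f K') y'.
  apply: Hc; move/feasS: Hy0 => [Hb HC].
  have [K [inK [FK _]]] := key f Hb HC.
  by exists K; split=> //; exists y0.
exists (upd m y (ev m K y)); split.
  apply/feasS; split=> [i lti|F inF].
    rewrite /upd (ltn_eqF lti); by case: Fy => Hb _; apply: Hb.
  rewrite ev_S ev_upd /upd eqxx -ev_fsubst; case: Fy => _ HC; apply: HC.
  exact: (In_map (fun F => fsubst m F K) inF).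
move=> y' /feasS [Hb HC].
have [K' [inK' [FK' le']]] := key f Hb HC.
rewrite ev_S ev_upd /upd eqxx -ev_fsubst; apply: le_trans le'.
exact: Hm.
Qed.

Definition ent (R : realFieldType) n (x : 'rV[R]_n) : seq R := [seq x ord0 i | i <- enum 'I_n].
Definition rsort (R : realFieldType) n (x : 'rV[R]_n) : 'rV[R]_n := \row_(i < n) (dsort x)`_i.
Definition sortedr (R : realFieldType) n (u : 'rV[R]_n) :=
  forall i j : 'I_n, (i <= j)%N -> u ord0 j <= u ord0 i.
Definition psum (R : realFieldType) n (u : 'rV[R]_n) (j : nat) : R :=
  \sum_(i < n | (i < j)%N) u ord0 i.

Lemma size_ent (R : realFieldType) n (x : 'rV[R]_n) : size (ent x) = n.
Proof. by rewrite size_map size_enum_ord. Qed.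

Lemma size_dsort (R : realFieldType) n (x : 'rV[R]_n) : size (dsort x) = n.
Proof. by rewrite size_sort size_ent. Qed.

Lemma ge_trans (R : realFieldType) : transitive (fun u v : R => v <= u).
Proof. by move=> u v w h1 h2; apply: le_trans h2 h1. Qed.

Lemma dsort_sorted (R : realFieldType) n (x : 'rV[R]_n) :
  sorted (fun u v : R => v <= u) (dsort x).
Proof. by apply: sort_sorted => u v; rewrite le_total. Qed.

Lemma rsort_sorted (R : realFieldType) n (x : 'rV[R]_n) : sortedr (rsort x).
Proof.
move=> i j lij; rewrite !mxE.
apply: (sorted_leq_nth (@ge_trans R) _ 0 (dsort_sorted x));
  rewrite ?inE ?size_dsort ?ltn_ord //.
Qed.

Lemma nth_ent (R : realFieldType) n (u : 'rV[R]_n) (i : 'I_n) : (ent u)`_i = u ord0 i.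
Proof. by rewrite /ent (nth_map i) ?nth_ord_enum // size_enum_ord. Qed.

Lemma prefix_ent (R : realFieldType) n (u : 'rV[R]_n) j : (j <= n)%N ->
  \sum_(k < j) (ent u)`_k = psum u j.
Proof.
move=> jn; rewrite (big_ord_widen n (fun k => (ent u)`_k) jn) /psum.
by apply: eq_bigr => i _; rewrite nth_ent.
Qed.

Lemma ent_rsort (R : realFieldType) n (x : 'rV[R]_n) : ent (rsort x) = dsort x.
Proof.
apply: (@eq_from_nth _ 0); first by rewrite size_ent size_dsort.
move=> k; rewrite size_ent => kn.
by rewrite (nth_ent (rsort x) (Ordinal kn)) mxE.
Qed.

Lemma dsort_sortedr (R : realFieldType) n (u : 'rV[R]_n) : sortedr u -> dsort u = ent u.
Proof.
move=> su; apply: sorted_sort; first exact: ge_trans.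
rewrite /ent sorted_map.
have: sorted (fun i j : 'I_n => (i <= j)%N) (enum 'I_n).
  have := iota_sorted 0 n; rewrite -val_enum_ord sorted_map.
  apply: sub_sorted => i j /= h; exact: h.
apply: sub_sorted => i j /= lij; exact: su.
Qed.

Lemma perm_dsort (R : realFieldType) n (x : 'rV[R]_n) : exists s : 'S_n, col_perm s x = rsort x.
Proof.
have: perm_eq (dsort x) [tuple x ord0 i | i < n].
  by rewrite perm_sort.
move/tuple_permP => [p ep]; exists p; apply/rowP => i; rewrite !mxE.
have -> : (dsort x)`_i = nth 0 [tuple tnth [tuple x ord0 i0 | i0 < n] (p i0) | i0 < n] i.
  by rewrite -ep.
by rewrite nth_mktuple tnth_mktuple.
Qed.

Lemma mem_dsort_box (R : realFieldType) n (a b : R) (x : 'rV[R]_n) :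
  in_box a b x -> forall k : 'I_n, a <= (dsort x)`_k <= b.
Proof.
move=> hx k; have: (dsort x)`_k \in dsort x by rewrite mem_nth // size_dsort.
by rewrite mem_sort => /mapP [i _ ->]; apply: hx.
Qed.

Lemma rsort_box (R : realFieldType) n (a b : R) (x : 'rV[R]_n) :
  in_box a b x -> in_box a b (rsort x).
Proof. by move=> hx i; rewrite mxE; apply: mem_dsort_box. Qed.

Lemma psum_ind (R : realFieldType) n (u : 'rV[R]_n) j :
  psum u j = \sum_(i < n) ((i < j)%N%:R * u ord0 i).
Proof.
rewrite /psum big_mkcond; apply: eq_bigr => i _.
by case: (i < j)%N; rewrite ?mul1r ?mul0r.
Qed.

Lemma rearr (R : realFieldType) n (v : 'rV[R]_n) (c : 'I_n -> R) j :
  sortedr v -> (j <= n)%N -> (forall i, 0 <= c i <= 1) ->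
  \sum_(i < n) c i = \sum_(i < n) ((i < j)%N%:R : R) ->
  \sum_(i < n) c i * v ord0 i <= psum v j.
Proof.
move=> sv jn hc hs; case: n v c sv jn hc hs => [|n] v c sv jn hc hs.
  by rewrite /psum !big_ord0.
have jn' : (j.-1 < n.+1)%N by lia.
set q := v ord0 (Ordinal jn').
rewrite psum_ind -subr_ge0.
have -> : \sum_(i < n.+1) (i < j)%:R * v ord0 i - \sum_(i < n.+1) c i * v ord0 i =
   \sum_(i < n.+1) (((i < j)%:R - c i) * (v ord0 i - q)).
  have e : \sum_(i < n.+1) (((i < j)%:R - c i) * (v ord0 i - q)) =
     \sum_(i < n.+1) (i < j)%:R * v ord0 i - \sum_(i < n.+1) c i * v ord0 i
     - q * (\sum_(i < n.+1) ((i < j)%N%:R : R) - \sum_(i < n.+1) c i).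
    rewrite mulrBr !big_distrr /= -!sumrB; apply: eq_bigr => i _; ring.
  by rewrite e hs subrr mulr0 subr0.
apply: sumr_ge0 => i _.
have := hc i; case/andP=> c0 c1.
case: (ltnP i j) => ij.
  have : q <= v ord0 i by apply: sv => /=; rewrite -ltnS (ltn_predK ij).
  move=> h; rewrite /= ?mulr1n; apply: mulr_ge0; lra.
have : v ord0 i <= q by apply: sv => /=; apply: leq_trans (leq_pred j) ij.
move=> h; rewrite /= ?mulr0n; apply: mulr_le0; lra.
Qed.

Lemma csum_le (R : realFieldType) n (x : 'rV[R]_n) (c : 'I_n -> R) j :
  (j <= n)%N -> (forall i, 0 <= c i <= 1) ->
  \sum_(i < n) c i = \sum_(i < n) ((i < j)%N%:R : R) ->
  \sum_(i < n) c i * x ord0 i <= psum (rsort x) j.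
Proof.
move=> jn hc hs; have [s es] := perm_dsort x.
rewrite (reindex_inj (@perm_inj _ s)) /=.
have -> : \sum_(i < n) c (s i) * x ord0 (s i) = \sum_(i < n) c (s i) * rsort x ord0 i.
  by apply: eq_bigr => i _; rewrite -es mxE.
apply: rearr => //; first exact: rsort_sorted.
by rewrite -hs [in RHS](reindex_inj (@perm_inj _ s)).
Qed.

Lemma psum_rsort_c (R : realFieldType) n (z : 'rV[R]_n) j :
  exists c : 'I_n -> R, [/\ forall i, 0 <= c i <= 1,
     \sum_(i < n) c i = \sum_(i < n) ((i < j)%N%:R : R) &
     psum (rsort z) j = \sum_(i < n) c i * z ord0 i].
Proof.
have [s es] := perm_dsort z.
exists (fun k => (((s^-1)%g k < j)%N)%:R); split.
- by move=> i; case: (_ < _)%N; rewrite /= ?ler01 ?lexx.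
- by rewrite (reindex_inj (@perm_inj _ s)); apply: eq_bigr => i _; rewrite permK.
rewrite psum_ind [RHS](reindex_inj (@perm_inj _ s)); apply: eq_bigr => i _.
by rewrite permK -es mxE.
Qed.

Lemma maj_psum (R : realFieldType) n (u x : 'rV[R]_n) : sortedr u ->
  majorizes u x <->
  ((forall j, (j < n)%N -> psum (rsort x) j <= psum u j) /\ psum u n = psum (rsort x) n).
Proof.
move=> su; rewrite /majorizes (dsort_sortedr su).
have ex : dsort x = ent (rsort x) by rewrite ent_rsort.
rewrite ex.
split=> [[h1 h2]|[h1 h2]]; split.
- move=> j jn; rewrite -(prefix_ent u (ltnW jn)) -(prefix_ent (rsort x) (ltnW jn)); exact: h1.
- by rewrite -(prefix_ent u (leqnn n)) -(prefix_ent (rsort x) (leqnn n)).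
- by move=> j jn; rewrite (prefix_ent u (ltnW jn)) (prefix_ent (rsort x) (ltnW jn)); exact: h1.
- by rewrite (prefix_ent u (leqnn n)) (prefix_ent (rsort x) (leqnn n)).
Qed.

Lemma rsort_adm (R : realFieldType) n (a b : R) (x : 'rV[R]_n) :
  in_box a b x -> majorizes (rsort x) x /\ sorted_in a b (rsort x).
Proof.
move=> hx; split; last by split; [exact: rsort_box|exact: rsort_sorted].
rewrite /majorizes (dsort_sortedr (rsort_sorted x)) ent_rsort.
by split=> // j _.
Qed.

Lemma psum_all (R : realFieldType) n (u : 'rV[R]_n) : psum u n = \sum_(i < n) u ord0 i.
Proof. by rewrite /psum; apply: eq_bigl => i; rewrite ltn_ord. Qed.

Lemma psumS (R : realFieldType) n (u : 'rV[R]_n) (j : 'I_n) :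
  psum u j.+1 = psum u j + u ord0 j.
Proof.
rewrite /psum (bigD1 j) //= addrC; congr (_ + _); apply: eq_bigl => i.
by rewrite ltnS ltn_neqAle andbC.
Qed.

Lemma psum_delta (R : realFieldType) n (j0 : 'I_n) m :
  \sum_(i < n | (i < m)%N) (((i == j0) : nat)%:R : R) = ((j0 < m)%N)%:R.
Proof.
rewrite big_mkcond (bigD1 j0) //= eqxx big1 ?addr0.
  by case: (j0 < m)%N.
by move=> i /negbTE ->; case: (i < m)%N.
Qed.

Lemma psum_split (R : realFieldType) n (u : 'rV[R]_n) m :
  \sum_(i < n) u ord0 i = psum u m + \sum_(i < n | ~~ (i < m)%N) u ord0 i.
Proof. by rewrite /psum (bigID (fun i : 'I_n => (i < m)%N)). Qed.

Lemma Tstep (R : realFieldType) n (a b : R) (g : 'rV[R]_n -> R) :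
  convex_on (in_box a b) g ->
  (forall s y, in_box a b y -> g (col_perm s y) = g y) ->
  forall x y, x != y -> in_box a b x -> in_box a b y -> sortedr x -> sortedr y ->
  (forall m, (m <= n)%N -> psum x m <= psum y m) -> psum x n = psum y n ->
  exists y', [/\ in_box a b y', sortedr y',
     (forall m, (m <= n)%N -> psum x m <= psum y' m),
     psum x n = psum y' n &
     (#|[pred i | x ord0 i != y' ord0 i]| < #|[pred i | x ord0 i != y ord0 i]|)%N /\
     g y' <= g y].
Proof.
move=> hc hp x y nxy bx by_ sx sy hm hn.
have hsum : \sum_(i < n) x ord0 i = \sum_(i < n) y ord0 i by rewrite -!psum_all.
have [j0 hj0] : exists i, x ord0 i < y ord0 i.
  case: (boolP [exists i, x ord0 i < y ord0 i]) => [/existsP //|/existsPn H].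
  case/negP: nxy; apply/eqP/rowP => i.
  apply/eqP; rewrite eq_le; apply/andP; split; last first.
    by have := H i; rewrite -leNgt.
  have e : \sum_(i < n) (x ord0 i - y ord0 i) = 0 by rewrite sumrB hsum subrr.
  have h0 : forall i0 : 'I_n, true -> 0 <= x ord0 i0 - y ord0 i0.
    by move=> i0 _; rewrite subr_ge0 leNgt; apply: H.
  have := psumr_eq0P h0 e (i := i) isT.
  move=> /eqP; rewrite subr_eq0 => /eqP ->; exact: lexx.
case: (@arg_maxnP _ j0 (fun i => x ord0 i < y ord0 i) (fun i : 'I_n => (i : nat)) hj0) => j xj jmax.
have P1 : forall i : 'I_n, (j < i)%N -> y ord0 i <= x ord0 i.
  move=> i ji; rewrite leNgt; apply/negP => h; have := jmax i h; lia.
have [k0 hk0] : exists i : 'I_n, (j < i)%N && (y ord0 i < x ord0 i).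
  case: (boolP [exists i : 'I_n, (j < i)%N && (y ord0 i < x ord0 i)]) => [/existsP //|/existsPn H].
  have eqt : forall i : 'I_n, (j < i)%N -> x ord0 i = y ord0 i.
    move=> i ji; apply/eqP; rewrite eq_le P1 // andbT; have := H i.
    by rewrite ji /= -leNgt.
  have e1 : psum x j.+1 = psum y j.+1.
    have := hsum; rewrite (psum_split x j.+1) (psum_split y j.+1).
    have -> : \sum_(i < n | ~~ (i < j.+1)%N) x ord0 i = \sum_(i < n | ~~ (i < j.+1)%N) y ord0 i.
      by apply: eq_bigr => i; rewrite -leqNgt => ji; apply: eqt.
    by move/addIr.
  move: e1; rewrite !psumS => e1.
  have := hm j (ltnW (ltn_ord j)); lra.
case: (@arg_minnP _ k0 (fun i : 'I_n => (j < i)%N && (y ord0 i < x ord0 i)) (fun i : 'I_n => (i : nat)) hk0) => k /andP [jk ykx] kmin.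
have P2 : forall i : 'I_n, (j < i)%N -> (i < k)%N -> x ord0 i = y ord0 i.
  move=> i ji ik; apply/eqP; rewrite eq_le P1 // andbT leNgt; apply/negP => h.
  have := kmin i; rewrite ji h /= => /(_ isT); lia.
have njk : j != k by apply/eqP => e; move: jk; rewrite e ltnn.
have xkj : x ord0 k <= x ord0 j by apply: sx; exact: ltnW.
have ykj : y ord0 k <= y ord0 j by apply: sy; exact: ltnW.
pose d := if y ord0 j - x ord0 j <= x ord0 k - y ord0 k then y ord0 j - x ord0 j
          else x ord0 k - y ord0 k.
have d1 : d <= y ord0 j - x ord0 j by rewrite /d; case: ifP => h; lra.
have d2 : d <= x ord0 k - y ord0 k by rewrite /d; case: ifP => h; lra.
have d0 : 0 < d by rewrite /d; case: ifP => h; lra.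
pose y' := \row_(i < n) (y ord0 i + d * ((((i == k) : nat)%:R : R) - ((i == j) : nat)%:R)).
have y'j : y' ord0 j = y ord0 j - d by rewrite mxE eqxx (negbTE njk) /=; ring.
have y'k : y' ord0 k = y ord0 k + d by rewrite mxE eqxx eq_sym (negbTE njk) /=; ring.
have y'o : forall i, i != j -> i != k -> y' ord0 i = y ord0 i.
  by move=> i /negbTE ij /negbTE ik; rewrite mxE ij ik /=; ring.
have ps : forall m, psum y' m = psum y m + d * ((((k < m)%N)%:R : R) - ((j < m)%N)%:R).
  move=> m; rewrite /psum.
  rewrite (eq_bigr (fun i : 'I_n => y ord0 i + (d * (((i == k) : nat)%:R) - d * (((i == j) : nat)%:R)))); last by move=> i _; rewrite mxE mulrBr.
  rewrite big_split /= sumrB -!mulr_sumr !psum_delta; ring.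
exists y'; split.
- move=> i; case: (eqVneq i j) => [->|ij]; first by rewrite y'j; have := bx j; have := by_ j; move=> /andP[? ?] /andP[? ?]; apply/andP; split; lra.
  case: (eqVneq i k) => [->|ik]; first by rewrite y'k; have := bx k; have := by_ k; move=> /andP[? ?] /andP[? ?]; apply/andP; split; lra.
  by rewrite y'o //; apply: by_.
- have Fl : forall l : 'I_n, (j < l)%N -> y ord0 l <= y' ord0 j.
    move=> l jl; rewrite y'j; have := P1 l jl; have := sx j l (ltnW jl); lra.
  move=> i l il.
  case: (eqVneq l j) => [el|lj].
    rewrite el y'j; case: (eqVneq i j) => [->|ij]; first by rewrite y'j.
    have ik : i != k by apply/eqP => e; move: il; rewrite e el; lia.
    rewrite y'o //; have := sy i j; rewrite -el => /(_ il); lra.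
  case: (eqVneq l k) => [el|lk].
    rewrite el y'k; case: (eqVneq i j) => [->|ij]; first by rewrite y'j; lra.
    case: (eqVneq i k) => [->|ik]; first by rewrite y'k.
    rewrite y'o //; case: (ltnP i j) => hij.
      have := sy i j (ltnW hij); lra.
    have ji : (j < i)%N by rewrite ltn_neqAle hij andbT eq_sym; apply/eqP => e; case/eqP: ij; apply: val_inj.
    have ik' : (i < k)%N by rewrite -el ltn_neqAle il andbT; rewrite -el in ik; exact: ik.
    rewrite -(P2 i ji ik'); have := sx i k (ltnW ik'); lra.
  rewrite (y'o l lj lk); case: (eqVneq i j) => [ei|ij].
    rewrite ei; apply: Fl; rewrite ei in il; rewrite ltn_neqAle il andbT eq_sym; exact: lj.
  case: (eqVneq i k) => [ei|ik].
    rewrite ei y'k; have := sy k l; rewrite -ei => /(_ il); lra.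
  by rewrite y'o //; apply: sy.
- move=> m mn; rewrite ps.
  case: (ltnP k m) => km.
    have jm : (j < m)%N by apply: ltn_trans jk km.
    rewrite jm /=; have := hm m mn; lra.
  case: (ltnP j m) => jm; last by rewrite /=; have := hm m mn; lra.
  rewrite /=.
  have key : y ord0 j - x ord0 j <= psum y m - psum x m.
    rewrite /psum -sumrB (bigID (fun i : 'I_n => (i < j)%N)) /=.
    have -> : \sum_(i < n | (i < m)%N && (i < j)%N) (y ord0 i - x ord0 i) = psum y j - psum x j.
      rewrite /psum -sumrB; apply: eq_bigl => i; case ij: (i < j)%N; rewrite ?andbT ?andbF //.
      by apply: ltn_trans ij jm.
    rewrite (bigD1 j) /=; last by rewrite jm ltnn.
    rewrite big1.
      have := hm j (ltnW (ltn_ord j)); lra.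
    move=> i /andP [/andP [im ij] nij]; rewrite (P2 i) ?subrr //.
      by rewrite ltn_neqAle leqNgt ij andbT eq_sym; exact: nij.
    by apply: leq_trans im km.
  lra.
- rewrite hn ps ltn_ord (ltn_ord j) /=; ring.
split.
- apply: proper_card; apply/properP; split.
    apply/subsetP => i; rewrite !inE.
    case: (eqVneq i j) => [->|ij]; first by move=> _; rewrite lt_eqF.
    case: (eqVneq i k) => [->|ik]; first by move=> _; rewrite gt_eqF.
    by rewrite y'o.
  case: (lerP (y ord0 j - x ord0 j) (x ord0 k - y ord0 k)) => h.
    exists j; first by rewrite inE lt_eqF.
    rewrite inE negbK y'j /d h; apply/eqP; ring.
  exists k; first by rewrite inE gt_eqF.
  rewrite inE negbK y'k /d; rewrite leNgt h /=; apply/eqP; ring.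
- pose th := d / (y ord0 j - y ord0 k).
  have yjk : 0 < y ord0 j - y ord0 k.
    have := sx j k (ltnW jk); lra.
  have th0 : 0 <= th <= 1.
    apply/andP; split; first by apply: divr_ge0; lra.
    rewrite ler_pdivrMr // mul1r; have := sx j k (ltnW jk); lra.
  have ey : y' = th *: col_perm (tperm j k) y + (1 - th) *: y.
    apply/rowP => i.
    case: (eqVneq i j) => [->|ij].
      rewrite y'j !mxE tpermL /th; field; lra.
    case: (eqVneq i k) => [->|ik].
      rewrite y'k !mxE tpermR /th; field; lra.
    rewrite y'o // !mxE tpermD 1?eq_sym //; ring.
  have bp : in_box a b (col_perm (tperm j k) y) by move=> i; rewrite mxE; apply: by_.
  rewrite ey; apply: le_trans (hc _ _ _ bp by_ th0) _.
  rewrite hp //; lra.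
Qed.

Lemma Tmaj (R : realFieldType) n (a b : R) (g : 'rV[R]_n -> R) :
  convex_on (in_box a b) g ->
  (forall s y, in_box a b y -> g (col_perm s y) = g y) ->
  forall d x y, in_box a b x -> in_box a b y -> sortedr x -> sortedr y ->
  (forall m, (m <= n)%N -> psum x m <= psum y m) -> psum x n = psum y n ->
  (#|[pred i | x ord0 i != y ord0 i]| <= d)%N -> g x <= g y.
Proof.
move=> hc hp; elim=> [|d IH] x y bx by_ sx sy hm hn hd;
  (case: (eqVneq x y) => [->|nxy]; first exact: lexx).
  case/negP: nxy; apply/eqP/rowP => i; apply/eqP.
  move: hd; rewrite leqn0 => /eqP hd; have := card0_eq hd i; rewrite inE => /negbT; by rewrite negbK.
have [y' [b' s' m' n' [c' g']]] := Tstep hc hp nxy bx by_ sx sy hm hn.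
apply: le_trans g'; apply: IH => //.
by rewrite -ltnS; apply: leq_trans c' hd.
Qed.

Definition tof (R : realFieldType) n (a b : R) (u : 'rV[R]_n) (k : nat) : R :=
  if (insub k : option 'I_n) is Some i then (u ord0 i - a) / (b - a) else 0.

Lemma tof_ord (R : realFieldType) n (a b : R) (u : 'rV[R]_n) (i : 'I_n) :
  tof a b u i = (u ord0 i - a) / (b - a).
Proof. by rewrite /tof valK. Qed.

Lemma tof_ge (R : realFieldType) n (a b : R) (u : 'rV[R]_n) k :
  (n <= k)%N -> tof a b u k = 0.
Proof. by move=> nk; rewrite /tof insubF // ltnNge nk. Qed.

Lemma jensen (R : realFieldType) n (a b : R) (g : 'rV[R]_n -> R) :
  convex_on (in_box a b) g -> forall N (w : nat -> R) (p : nat -> 'rV[R]_n),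
  (forall j, (j < N)%N -> 0 <= w j) -> \sum_(j < N) w j = 1 ->
  (forall j, (j < N)%N -> in_box a b (p j)) ->
  g (\sum_(j < N) w j *: p j) <= \sum_(j < N) w j * g (p j).
Proof.
move=> hc; elim=> [|N IH] w p hw hs hp; first by move: hs; rewrite big_ord0 => /eqP; rewrite eq_sym oner_eq0.
rewrite !big_ord_recr /=.
set W := \sum_(j < N) w j.
have wN : w N = 1 - W by rewrite -hs big_ord_recr /= /W; ring.
have W0 : 0 <= W by apply: sumr_ge0 => j _; exact: hw _ (ltnW (ltn_ord j)).
case: (eqVneq W 0) => [eW|nW].
  have z : forall j : 'I_N, w j = 0.
    by move=> j; apply: (psumr_eq0P _ eW) => // i _; exact: hw _ (ltnW (ltn_ord i)).
  rewrite !big1 ?add0r; [|by move=> j _; rewrite z mul0r|by move=> j _; rewrite z scale0r].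
  by rewrite wN eW subr0 scale1r mul1r.
have Wp : 0 < W by rewrite lt_def nW W0.
set q := \sum_(j < N) (w j / W) *: p j.
have hq : g q <= \sum_(j < N) (w j / W) * g (p j).
  apply: (IH (fun j => w j / W) p).
  - by move=> j jN; apply: divr_ge0 => //; exact: hw _ (ltnW jN).
  - by rewrite -mulr_suml mulfV.
  - by move=> j jN; exact: hp _ (ltnW jN).
have e1 : \sum_(j < N) w j *: p j = W *: q.
  rewrite /q scaler_sumr; apply: eq_bigr => j _; rewrite scalerA; congr (_ *: _).
  by rewrite mulrCA mulfV ?mulr1.
have e2 : \sum_(j < N) w j * g (p j) = W * \sum_(j < N) (w j / W) * g (p j).
  rewrite mulr_sumr; apply: eq_bigr => j _; rewrite mulrA mulrCA mulfV ?mulr1 //.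
have bq : in_box a b q.
  move=> i; rewrite /q summxE.
  have sw : \sum_(j < N) (w j / W) = 1 by rewrite -mulr_suml mulfV.
  apply/andP; split.
    rewrite -[a]mul1r -sw mulr_suml; apply: ler_sum => j _; rewrite mxE.
    apply: ler_wpM2l; first by apply: divr_ge0 => //; exact: hw _ (ltnW (ltn_ord j)).
    by case/andP: (hp j (ltnW (ltn_ord j)) i).
  rewrite -[b]mul1r -sw mulr_suml; apply: ler_sum => j _; rewrite mxE.
  apply: ler_wpM2l; first by apply: divr_ge0 => //; exact: hw _ (ltnW (ltn_ord j)).
  by case/andP: (hp j (ltnW (ltn_ord j)) i).
rewrite e1 e2 wN (addrC (W *: q)).
have hN := hp N (ltnSn N).
have wN0 := hw N (ltnSn N).
have t01 : 0 <= w N <= 1 by apply/andP; split; lra.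
have := hc _ _ _ hN bq t01; rewrite wN (_ : 1 - (1 - W) = W); last by ring.
move=> h; apply: le_trans h _; rewrite [X in _ <= X]addrC lerD2l; apply: ler_wpM2l => //.
Qed.

Lemma tele (R : realFieldType) (T : nat -> R) N :
  \sum_(j < N) (T j - T j.+1) = T 0%N - T N.
Proof. elim: N => [|N IH]; first by rewrite big_ord0 subrr. by rewrite big_ord_recr /= IH; ring. Qed.

Lemma tele_cond (R : realFieldType) (T : nat -> R) N i : (i < N)%N ->
  \sum_(j < N) (T j - T j.+1) * ((i < j)%N%:R) = T i.+1 - T N.
Proof.
elim: N => [//|N IH]; rewrite ltnS leq_eqVlt => /orP [/eqP ->|iN].
  rewrite big_ord_recr /= ltnn mulr0 addr0 big1 ?subrr // => j _.
  by rewrite ltnNge (ltnW (ltn_ord j)) mulr0.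
by rewrite big_ord_recr /= IH // iN mulr1; ring.
Qed.

Lemma abel (R : realFieldType) (T ph : nat -> R) N :
  \sum_(j < N.+1) (T j - T j.+1) * ph j =
  T 0%N * ph 0%N + \sum_(j < N) T j.+1 * (ph j.+1 - ph j) - T N.+1 * ph N.
Proof.
elim: N => [|N IH]; first by rewrite big_ord1 big_ord0 /=; ring.
rewrite big_ord_recr /= IH [in RHS]big_ord_recr /=; ring.
Qed.

Lemma pcol_vert (R : realFieldType) n (a b : R) j : in_vertices a b (pcol n a b j).
Proof. by move=> i; rewrite mxE; case: ifP; [right|left]. Qed.

Lemma vert_box (R : realFieldType) n (a b : R) (v : 'rV[R]_n) :
  a <= b -> in_vertices a b v -> in_box a b v.
Proof. by move=> ab hv i; case: (hv i) => ->; rewrite ?lexx ?ab. Qed.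

Definition Tseq (R : realFieldType) n (a b : R) (u : 'rV[R]_n) (k : nat) : R :=
  if k is k'.+1 then tof a b u k' else 1.

Lemma tof_01 (R : realFieldType) n (a b : R) (u : 'rV[R]_n) k :
  a < b -> in_box a b u -> 0 <= tof a b u k <= 1.
Proof.
move=> ab bu; case: (ltnP k n) => kn; last by rewrite tof_ge // lexx ler01.
rewrite (tof_ord a b u (Ordinal kn)); have := bu (Ordinal kn) => /andP [h1 h2].
apply/andP; split; first by apply: divr_ge0; lra.
by rewrite ler_pdivrMr ?subr_gt0 // mul1r; lra.
Qed.

Lemma tof_dec (R : realFieldType) n (a b : R) (u : 'rV[R]_n) k :
  a < b -> in_box a b u -> sortedr u -> tof a b u k.+1 <= tof a b u k.
Proof.
move=> ab bu su; case: (ltnP k.+1 n) => kn.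
  have kn' : (k < n)%N by apply: ltnW.
  rewrite (tof_ord a b u (Ordinal kn)) (tof_ord a b u (Ordinal kn')).
  rewrite ler_pM2r ?invr_gt0 ?subr_gt0 // lerD2r; apply: su => /=; exact: leqnSn.
rewrite tof_ge //; by case/andP: (tof_01 k ab bu).
Qed.

Lemma B1 (R : realFieldType) n (a b : R) (phi g : 'rV[R]_n -> R) :
  a < b -> convex_on (in_box a b) g -> (forall v, in_vertices a b v -> g v <= phi v) ->
  forall u, in_box a b u -> sortedr u -> g u <= ffun_f a b phi u.
Proof.
move=> ab hc hv u bu su.
pose T := Tseq a b u; pose w := fun j => T j - T j.+1.
have hw : forall j, (j < n.+1)%N -> 0 <= w j.
  move=> [|j] _; rewrite /w /T /= subr_ge0.
    by case/andP: (tof_01 0 ab bu).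
  exact: tof_dec.
have hs : \sum_(j < n.+1) w j = 1 by rewrite /w tele /T /= (@tof_ge _ _ a b u n (leqnn n)) subr0.
have eu : u = \sum_(j < n.+1) w j *: pcol n a b j.
  apply/rowP => i; rewrite summxE.
  rewrite (eq_bigr (fun j : 'I_n.+1 => w j * a + (b - a) * (w j * ((i < j)%N%:R)))); last first.
    by move=> j _; rewrite !mxE; case: (i < j)%N; rewrite /=; ring.
  rewrite big_split /= -mulr_suml hs -mulr_sumr tele_cond; last by apply: ltnW; rewrite ltnS.
  rewrite /T /= (@tof_ge _ _ a b u n (leqnn n)) tof_ord; field; lra.
have ef : ffun_f a b phi u = \sum_(j < n.+1) w j * phi (pcol n a b j).
  rewrite /w (abel T (fun j => phi (pcol n a b j))) /T /= (@tof_ge _ _ a b u n (leqnn n)) mul1r mul0r subr0 /ffun_f; congr (_ + _).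
  by apply: eq_bigr => i _; rewrite tof_ord.
rewrite [in X in g X]eu ef.
apply: le_trans (jensen hc hw hs (fun j _ => vert_box (ltW ab) (pcol_vert a b j))) _.
apply: ler_sum => j _; apply: ler_wpM2l; first by apply: hw.
exact: hv (pcol_vert a b j).
Qed.

Lemma col_perm_box (R : realFieldType) n (a b : R) (s : 'S_n) y :
  in_box a b y -> in_box a b (col_perm s y).
Proof. by move=> hy i; rewrite mxE. Qed.

Lemma col_perm_vert (R : realFieldType) n (a b : R) (s : 'S_n) y :
  in_vertices a b y -> in_vertices a b (col_perm s y).
Proof. by move=> hy i; rewrite mxE. Qed.

Lemma g_perm (R : realFieldType) n (a b : R) (phi g : 'rV[R]_n -> R) :
  a < b -> perm_invariant_on (in_box a b) phi ->
  is_conv_env (in_box a b) (in_vertices a b) phi g ->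
  forall s y, in_box a b y -> g (col_perm s y) = g y.
Proof.
move=> ab hphi [hc hle hmax].
have le1 : forall (s : 'S_n) y, in_box a b y -> g (col_perm s y) <= g y.
  move=> s; apply: (hmax (fun y => g (col_perm s y))).
  - move=> x y t bx by_ ht.
    have -> : col_perm s (t *: x + (1 - t) *: y) = t *: col_perm s x + (1 - t) *: col_perm s y.
      by apply/rowP => i; rewrite !mxE.
    by apply: hc => //; apply: col_perm_box.
  - move=> v hv; apply: le_trans (hle _ (col_perm_vert s hv)) _.
    by rewrite hphi //; apply: vert_box (ltW ab) hv.
move=> s y hy; apply/eqP; rewrite eq_le le1 //=.
have e : y = col_perm s^-1 (col_perm s y) by apply/rowP => i; rewrite !mxE permKV.
by rewrite [X in g X <= _]e le1 //; apply: col_perm_box.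
Qed.

Lemma vert_sorted (R : realFieldType) n (a b : R) (u : 'rV[R]_n) :
  a < b -> in_vertices a b u -> sortedr u -> exists k, (k <= n)%N /\ u = pcol n a b k.
Proof.
move=> ab hv su.
case: (boolP [exists i, u ord0 i == a]) => [/existsP [i0 hi0]|/existsPn H].
  case: (@arg_minnP _ i0 (fun i => u ord0 i == a) (fun i : 'I_n => (i : nat)) hi0) => k uk kmin.
  exists k; split; first exact: ltnW.
  apply/rowP => i; rewrite mxE; case: ltnP => ik.
    case: (hv i) => // hi; have := kmin i; rewrite hi eqxx => /(_ isT); lia.
  have := su _ _ ik; rewrite (eqP uk); case: (hv i) => // ->; lra.
exists n; split=> //; apply/rowP => i; rewrite mxE ltn_ord.
by case: (hv i) => // hi; have := H i; rewrite hi eqxx.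
Qed.

Lemma f_pcol (R : realFieldType) n (a b : R) (phi : 'rV[R]_n -> R) k :
  a < b -> (k <= n)%N -> ffun_f a b phi (pcol n a b k) = phi (pcol n a b k).
Proof.
move=> ab kn; rewrite /ffun_f.
rewrite (eq_bigr (fun i : 'I_n => ((i < k)%N%:R) *
          (phi (pcol n a b i.+1) - phi (pcol n a b i)))); last first.
  move=> i _; rewrite mxE; case: (i < k)%N => /=; last by rewrite subrr mul0r.
  by rewrite divff // subr_eq0 gt_eqF.
have -> : \sum_(i < n) ((i < k)%N%:R * (phi (pcol n a b i.+1) - phi (pcol n a b i))) =
   \sum_(i < n | (i < k)%N) (phi (pcol n a b i.+1) - phi (pcol n a b i)).
  by rewrite [RHS]big_mkcond; apply: eq_bigr => i _; case: (i < k)%N; rewrite /= ?mul1r ?mul0r.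
have := big_ord_widen n (fun i => phi (pcol n a b i.+1) - phi (pcol n a b i)) kn.
rewrite /= => <-.
have := tele (fun i => phi (pcol n a b i)) k; rewrite /= => e.
rewrite (eq_bigr (fun i : 'I_k => - (phi (pcol n a b i) - phi (pcol n a b i.+1)))); last by move=> i _; ring.
rewrite sumrN e; ring.
Qed.

Lemma In_mem (T : eqType) (x : T) (s : seq T) : List.In x s <-> x \in s.
Proof.
elim: s => [|y s IH] //=; rewrite in_cons; split.
  by case=> [->|/IH ->]; rewrite ?eqxx ?orbT.
by case/orP => [/eqP ->|/IH]; [left|right].
Qed.

Lemma In_cat (T : Type) (x : T) (s1 s2 : seq T) :
  List.In x (s1 ++ s2) <-> List.In x s1 \/ List.In x s2.
Proof.
elim: s1 => [|y s IH] /=; first by split; [right|case].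
split; first by case=> [->|/IH [h|h]]; [left; left|left; right|right].
by case=> [[->|h]|h]; [left|right; apply/IH; left|right; apply/IH; right].
Qed.

Definition ordF (R : realFieldType) (k : nat) : form R :=
  (fun i => ((i == k) : nat)%:R - ((i == k.+1) : nat)%:R, 0).
Definition majF (R : realFieldType) n (a b : R) (x : 'rV[R]_n) (j : nat) : form R :=
  (fun i => if (i < j)%N then b - a else 0, \sum_(i < n | (i < j)%N) a - psum (rsort x) j).
Definition negF (R : realFieldType) (F : form R) : form R := (fun i => - F.1 i, - F.2).
Definition Cx (R : realFieldType) n (a b : R) (x : 'rV[R]_n) : seq (form R) :=
  map (@ordF R) (iota 0 n.-1) ++
  (map (majF a b x) (iota 0 n) ++ [:: majF a b x n; negF (majF a b x n)]).
Definition fobj (R : realFieldType) n (a b : R) (phi : 'rV[R]_n -> R) : form R :=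
  (fun i => phi (pcol n a b i.+1) - phi (pcol n a b i), phi (pcol n a b 0)).
Definition uof (R : realFieldType) n (a b : R) (t : nat -> R) : 'rV[R]_n :=
  \row_(i < n) (a + (b - a) * t i).

Lemma sum_ind (R : realFieldType) n (t : nat -> R) k : (k < n)%N ->
  \sum_(i < n) ((((i : nat) == k) : nat)%:R * t i) = t k.
Proof.
move=> kn; rewrite (bigD1 (Ordinal kn)) //= eqxx mul1r big1 ?addr0 //.
move=> i ik; have -> : (i == k :> nat) = false.
  by apply/negbTE; apply: contra ik => /eqP e; apply/eqP; apply: val_inj.
by rewrite mul0r.
Qed.

Lemma ev_ordF (R : realFieldType) n (t : nat -> R) k : (k.+1 < n)%N ->
  ev n (@ordF R k) t = t k - t k.+1.
Proof.
move=> kn; rewrite /ev /= addr0.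
rewrite (eq_bigr (fun i : 'I_n => ((((i : nat) == k) : nat)%:R * t i) - ((((i : nat) == k.+1) : nat)%:R * t i)));
  last by move=> i _; rewrite mulrBl.
by rewrite sumrB !sum_ind // ltnW.
Qed.

Lemma ev_majF (R : realFieldType) n (a b : R) (x : 'rV[R]_n) t j :
  ev n (majF a b x j) t = psum (uof n a b t) j - psum (rsort x) j.
Proof.
rewrite /ev /psum /= addrA; congr (_ - _).
rewrite [RHS](eq_bigr (fun i : 'I_n => a + (b - a) * t i)); last by move=> i _; rewrite mxE.
rewrite big_split /= [LHS]addrC; congr (_ + _).
by rewrite [RHS]big_mkcond; apply: eq_bigr => i _; case: (i < j)%N; rewrite ?mul0r.
Qed.

Lemma ev_negF (R : realFieldType) n (F : form R) t : ev n (negF F) t = - ev n F t.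
Proof. by rewrite /ev /= opprD -sumrN; congr (_ + _); apply: eq_bigr => i _; rewrite mulNr. Qed.

Lemma ev_fobj (R : realFieldType) n (a b : R) (phi : 'rV[R]_n -> R) t :
  a < b -> ev n (fobj a b phi) t = ffun_f a b phi (uof n a b t).
Proof.
move=> ab; rewrite /ev /ffun_f /= addrC; congr (_ + _); apply: eq_bigr => i _.
rewrite mxE mulrC; congr (_ * _); field; lra.
Qed.

Lemma uof_tof (R : realFieldType) n (a b : R) (u : 'rV[R]_n) :
  a < b -> uof n a b (tof a b u) = u.
Proof. by move=> ab; apply/rowP => i; rewrite mxE tof_ord; field; lra. Qed.

Lemma chain (R : realFieldType) n (t : nat -> R) :
  (forall k, (k.+1 < n)%N -> t k.+1 <= t k) ->
  forall i j, (i <= j)%N -> (j < n)%N -> t j <= t i.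
Proof.
move=> h i; elim=> [|j IH] ij jn; first by move: ij; rewrite leqn0 => /eqP ->.
move: ij; rewrite leq_eqVlt => /orP [/eqP ->|ij]; first exact: lexx.
apply: le_trans (h j jn) (IH _ (ltnW jn)); by rewrite -ltnS.
Qed.

Lemma adm_feas (R : realFieldType) n (a b : R) (x u : 'rV[R]_n) :
  a < b -> majorizes u x -> sorted_in a b u -> feas n (Cx a b x) (tof a b u).
Proof.
move=> ab mu [bu su]; have [h1 h2] := (maj_psum x su).1 mu.
split=> [i _|F]; first exact: tof_01.
move/In_cat => [/(@In_map_iff _ _ (@ordF R)) [k [<- /In_mem]]|/In_cat [/(@In_map_iff _ _ (majF a b x)) [j [<- /In_mem]]|]].
- rewrite mem_iota add0n => kn; rewrite ev_ordF; last by lia.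
  by rewrite subr_ge0; apply: tof_dec.
- rewrite mem_iota add0n => jn; rewrite ev_majF uof_tof // subr_ge0; exact: h1.
- by case=> [<-|[<-|[]]]; rewrite ?ev_negF ev_majF uof_tof // h2 subrr ?oppr0.
Qed.

Lemma feas_adm (R : realFieldType) n (a b : R) (x : 'rV[R]_n) t :
  a < b -> feas n (Cx a b x) t -> majorizes (uof n a b t) x /\ sorted_in a b (uof n a b t).
Proof.
move=> ab [hb hC].
have hC1 : forall k, (k.+1 < n)%N -> t k.+1 <= t k.
  move=> k kn; have := hC (ordF R k); rewrite ev_ordF // subr_ge0; apply.
  by apply/In_cat; left; apply: In_map; apply/In_mem; rewrite mem_iota; lia.
have su : sortedr (uof n a b t).
  move=> i j ij; rewrite !mxE lerD2l ler_pM2l ?subr_gt0 //.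
  exact: chain hC1 _ _ ij (ltn_ord j).
split; last first.
  split=> // i; rewrite mxE; have := hb i (ltn_ord i) => /andP [h0 h1].
  have e1 : 0 <= (b - a) * t i by apply: mulr_ge0; lra.
  have e2 : (b - a) * t i <= b - a by nra.
  apply/andP; split; lra.
apply/(maj_psum x su); split.
  move=> j jn; have := hC (majF a b x j); rewrite ev_majF subr_ge0; apply.
  by apply/In_cat; right; apply/In_cat; left; apply: In_map; apply/In_mem; rewrite mem_iota.
have e1 := hC (majF a b x n); have e2 := hC (negF (majF a b x n)).
move: e1 e2; rewrite ev_negF ev_majF => e1 e2.
have i1 : List.In (majF a b x n) (Cx a b x) by apply/In_cat; right; apply/In_cat; right; left.
have i2 : List.In (negF (majF a b x n)) (Cx a b x) by apply/In_cat; right; apply/In_cat; right; right; left.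
have := e1 i1; have := e2 i2; lra.
Qed.

Lemma psum_rsort_n (R : realFieldType) n (z : 'rV[R]_n) :
  psum (rsort z) n = \sum_(i < n) z ord0 i.
Proof.
have [s es] := perm_dsort z; rewrite psum_all -es.
rewrite [RHS](reindex_inj (@perm_inj _ s)); apply: eq_bigr => i _; by rewrite mxE.
Qed.

Lemma psum_comb (R : realFieldType) n (u v : 'rV[R]_n) t j :
  psum (t *: u + (1 - t) *: v) j = t * psum u j + (1 - t) * psum v j.
Proof.
rewrite /psum !mulr_sumr -big_split; apply: eq_bigr => i _; by rewrite !mxE.
Qed.

Lemma f_comb (R : realFieldType) n (a b : R) (phi : 'rV[R]_n -> R) (u v : 'rV[R]_n) t :
  ffun_f a b phi (t *: u + (1 - t) *: v) = t * ffun_f a b phi u + (1 - t) * ffun_f a b phi v.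
Proof.
rewrite /ffun_f !mulrDr !mulr_sumr addrACA -mulrDl.
have -> : t + (1 - t) = 1 by ring.
rewrite mul1r; congr (_ + _); rewrite -big_split; apply: eq_bigr => i _; rewrite !mxE /=; ring.
Qed.

Lemma adm_conv (R : realFieldType) n (a b : R) (x y ux uy : 'rV[R]_n) t :
  0 <= t <= 1 ->
  majorizes ux x -> sorted_in a b ux -> majorizes uy y -> sorted_in a b uy ->
  majorizes (t *: ux + (1 - t) *: uy) (t *: x + (1 - t) *: y) /\
  sorted_in a b (t *: ux + (1 - t) *: uy).
Proof.
move=> /andP [t0 t1] mx [bx sx] my [by_ sy].
have sw : sortedr (t *: ux + (1 - t) *: uy).
  move=> i j ij; rewrite !mxE; have := sx i j ij; have := sy i j ij => h1 h2.
  have : t * ux ord0 j <= t * ux ord0 i by apply: ler_wpM2l.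
  have : (1 - t) * uy ord0 j <= (1 - t) * uy ord0 i by apply: ler_wpM2l; lra.
  lra.
split; last first.
  split=> // i; rewrite !mxE; have := bx i; have := by_ i => /andP [h1 h2] /andP [h3 h4].
  have : t * a <= t * ux ord0 i by apply: ler_wpM2l.
  have : t * ux ord0 i <= t * b by apply: ler_wpM2l.
  have : (1 - t) * a <= (1 - t) * uy ord0 i by apply: ler_wpM2l; lra.
  have : (1 - t) * uy ord0 i <= (1 - t) * b by apply: ler_wpM2l; lra.
  move=> *; apply/andP; split; nra.
have [hx1 hx2] := (maj_psum x sx).1 mx.
have [hy1 hy2] := (maj_psum y sy).1 my.
apply/(maj_psum _ sw); split.
  move=> j jn; rewrite psum_comb.
  have [c [hc hs ->]] := psum_rsort_c (t *: x + (1 - t) *: y) j.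
  have -> : \sum_(i < n) c i * (t *: x + (1 - t) *: y) ord0 i =
     t * (\sum_(i < n) c i * x ord0 i) + (1 - t) * (\sum_(i < n) c i * y ord0 i).
    rewrite !mulr_sumr -big_split; apply: eq_bigr => i _; rewrite !mxE /=; ring.
  have := csum_le x (ltnW jn) hc hs; have := csum_le y (ltnW jn) hc hs.
  have := hx1 j jn; have := hy1 j jn => e1 e2 e3 e4.
  have : t * (\sum_(i < n) c i * x ord0 i) <= t * psum ux j.
    apply: ler_wpM2l => //; lra.
  have : (1 - t) * (\sum_(i < n) c i * y ord0 i) <= (1 - t) * psum uy j.
    apply: ler_wpM2l; lra.
  lra.
rewrite psum_comb hx2 hy2 !psum_rsort_n !mulr_sumr -big_split.
by apply: eq_bigr => i _; rewrite !mxE.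
Qed.

Lemma box_comb (R : realFieldType) n (a b : R) (y z : 'rV[R]_n) t :
  0 <= t <= 1 -> in_box a b y -> in_box a b z -> in_box a b (t *: y + (1 - t) *: z).
Proof.
move=> /andP [t0 t1] by_ bz i; rewrite !mxE; have := by_ i; have := bz i => /andP [h1 h2] /andP [h3 h4].
have : t * a <= t * y ord0 i by apply: ler_wpM2l.
have : t * y ord0 i <= t * b by apply: ler_wpM2l.
have : (1 - t) * a <= (1 - t) * z ord0 i by apply: ler_wpM2l; lra.
have : (1 - t) * z ord0 i <= (1 - t) * b by apply: ler_wpM2l; lra.
move=> *; apply/andP; split; nra.
Qed.

Lemma rsort_vert (R : realFieldType) n (a b : R) (v : 'rV[R]_n) :
  in_vertices a b v -> in_vertices a b (rsort v).
Proof.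
move=> hv i; rewrite mxE; have: (dsort v)`_i \in dsort v by rewrite mem_nth // size_dsort.
by rewrite mem_sort => /mapP [j _ ->]; apply: hv.
Qed.

Unset Implicit Arguments.

Theorem mainTheorem16 (R : realFieldType) (n : nat) (a b : R)
  (phi : 'rV[R]_n -> R) (g : 'rV[R]_n -> R) :
  a < b ->
  perm_invariant_on (in_box a b) phi ->
  is_conv_env (in_box a b) (in_box a b) phi g ->
  is_conv_env (in_box a b) (in_vertices a b) phi g ->
  forall x, in_box a b x ->
    (exists u, [/\ majorizes u x, sorted_in a b u & ffun_f a b phi u = g x]) /\
    (forall u, majorizes u x -> sorted_in a b u -> g x <= ffun_f a b phi u).
Proof.
move=> ab hphi _ hg x bx.
have gp := g_perm ab hphi hg.
case: hg => hc hle hmax.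
have part2 : forall z u, in_box a b z -> majorizes u z -> sorted_in a b u ->
    g z <= ffun_f a b phi u.
  move=> z u bz mu [bu su].
  have [s es] := perm_dsort z.
  rewrite -(gp s z bz) es.
  apply: le_trans (B1 ab hc hle bu su).
  have [h1 h2] := (maj_psum z su).1 mu.
  apply: (Tmaj hc gp _ _ _ _ _ _ (leqnn _)).
  - exact: rsort_box.
  - exact: bu.
  - exact: rsort_sorted.
  - exact: su.
  - move=> m; rewrite leq_eqVlt => /orP [/eqP ->|]; [by rewrite h2|exact: h1].
  - by rewrite h2.
have ex : forall z, exists u, in_box a b z -> [/\ majorizes u z, sorted_in a b u &
     forall u', majorizes u' z -> sorted_in a b u' -> ffun_f a b phi u <= ffun_f a b phi u'].
  move=> z; case: (Classical_Prop.classic (in_box a b z)) => bz; last by exists z.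
  have [m0 s0] := rsort_adm bz.
  have [t [ft hm]] := @LP R n (Cx a b z) (fobj a b phi) (ex_intro _ _ (adm_feas ab m0 s0)).
  exists (uof n a b t) => _; have [m s] := feas_adm ab ft; split => // u' mu' su'.
  have e := @uof_tof R n a b u' ab; rewrite -e -!ev_fobj //; apply: hm; exact: adm_feas.
pose U := fun z => proj1_sig (constructive_indefinite_description _ (ex z)).
have HU : forall z, in_box a b z -> [/\ majorizes (U z) z, sorted_in a b (U z) &
     forall u', majorizes u' z -> sorted_in a b u' -> ffun_f a b phi (U z) <= ffun_f a b phi u'].
  by move=> z bz; exact: (proj2_sig (constructive_indefinite_description _ (ex z)) bz).
pose H := fun z => ffun_f a b phi (U z).
have Hconv : convex_on (in_box a b) H.
  move=> y z t by_ bz ht; have [my sy _] := HU y by_; have [mz sz _] := HU z bz.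
  have [m s] := adm_conv ht my sy mz sz.
  have [_ _ mn] := HU _ (box_comb ht by_ bz).
  by rewrite /H -f_comb; apply: mn.
have Hvert : forall v, in_vertices a b v -> H v <= phi v.
  move=> v hv; have bv := vert_box (ltW ab) hv.
  have [m s] := rsort_adm bv.
  have [_ _ mn] := HU v bv.
  apply: le_trans (mn _ m s) _.
  have [k [kn ek]] := vert_sorted ab (rsort_vert hv) (rsort_sorted v).
  rewrite ek f_pcol // -ek.
  have [sg eg] := perm_dsort v; rewrite -eg hphi //.
have Hle := hmax H Hconv Hvert x bx.
have [m s _] := HU x bx.
split; last by move=> u; exact: part2.
exists (U x); split=> //; apply/eqP; rewrite eq_le Hle /=; exact: part2.
Qed.
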